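(* Let $n\ge 0$ and $r\ge 1$ be integers and let $x$ be a complex number with $xF_r(x)\neq 0$. Then \[ 2\sum_{j=0}^{n}F_{r-1}(x)^jF_{r+1}(x)^{n-j}=\sum_{j=0}^{n}\left(\frac{L_r(x)}{2}\right)^j\left(F_{r+1}(x)^{n-j}+F_{r-1}(x)^{n-j}\right)=2\,\frac{F_{r+1}(x)^{n+1}-F_{r-1}(x)^{n+1}}{xF_r(x)}. \]
   Context: The Fibonacci polynomials $F_n(x)$ and Lucas polynomials $L_n(x)$ are defined by $F_0(x)=0$, $F_1(x)=1$, $L_0(x)=2$, $L_1(x)=x$ and $G_{n+1}(x)=xG_n(x)+G_{n-1}(x)$. *)

(* Defs.v *)
From HB Require Import structures.
From mathcomp Require Import all_boot all_order all_algebra.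
From mathcomp Require Import reals.
From mathcomp Require Export complex.
Set Implicit Arguments. Unset Strict Implicit. Unset Printing Implicit Defensive.
Import Order.TTheory GRing.Theory Num.Theory.
Local Open Scope ring_scope.

Fixpoint Gpoly (R : nzRingType) (g0 g1 : {poly R}) (n : nat) : {poly R} :=
  match n with
  | 0 => g0
  | 1 => g1
  | S ((S m) as k) => 'X * Gpoly g0 g1 k + Gpoly g0 g1 m
  end.

Definition fibp (R : nzRingType) (n : nat) : {poly R} := Gpoly 0 1 n.
Definition lucp (R : nzRingType) (n : nat) : {poly R} := Gpoly 2%:R%:P 'X n.

(* Main.v *)
Require Import Defs.
From HB Require Import structures.
From mathcomp Require Import all_boot all_order all_algebra.
From mathcomp Require Import reals complex.
From mathcomp Require Import ring.
Import Order.TTheory GRing.Theory Num.Theory.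
Local Open Scope ring_scope.
Lemma geom_sum (F : comNzRingType) (a b : F) (n : nat) :
  (a - b) * \sum_(j < n.+1) b ^+ j * a ^+ (n - j) = a ^+ n.+1 - b ^+ n.+1.
Proof.
elim: n => [|n IH].
  by rewrite big_ord_recr big_ord0 /= !expr1 !expr0 add0r !mulr1.
rewrite big_ord_recr /= subnn expr0 mulr1.
have -> : \sum_(i < n.+1) b ^+ (widen_ord (leqnSn n.+1) i) * a ^+ (n.+1 - widen_ord (leqnSn n.+1) i)
   = a * \sum_(j < n.+1) b ^+ j * a ^+ (n - j).
  rewrite mulr_sumr; apply: eq_bigr => i _ /=.
  rewrite subSn; last by rewrite -ltnS. by rewrite exprS mulrCA.
rewrite mulrDr mulrA (mulrC (a - b)) -mulrA IH.
rewrite (exprS a n.+1) (exprS b n.+1). set u := a ^+ n.+1. set v := b ^+ n.+1. ring.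
Qed.
Lemma luc_sum (F : comNzRingType) (a b m : F) (n : nat) :
  2 * m = a + b ->
  (a - b) * \sum_(j < n.+1) m ^+ j * (a ^+ (n - j) + b ^+ (n - j))
   = 2 * (a ^+ n.+1 - b ^+ n.+1).
Proof.
move=> hm; elim: n => [|n IH].
  rewrite big_ord_recr big_ord0 /= !expr1 !expr0 add0r mul1r; ring.
rewrite big_ord_recl /= subn0 expr0 mul1r.
have -> : \sum_(i < n.+1) m ^+ (bump 0 i) * (a ^+ (n.+1 - bump 0 i) + b ^+ (n.+1 - bump 0 i))
   = m * \sum_(j < n.+1) m ^+ j * (a ^+ (n - j) + b ^+ (n - j)).
  rewrite mulr_sumr; apply: eq_bigr => i _ /=.
  by rewrite /bump /= add1n subSS exprS mulrA.
rewrite mulrDr mulrCA IH mulrA (mulrC m 2) hm (exprS a n.+1) (exprS b n.+1).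
set u := a ^+ n.+1. set v := b ^+ n.+1. ring.
Qed.
Lemma fib_rec (Rg : nzRingType) (k : nat) : fibp Rg k.+2 = 'X * fibp Rg k.+1 + fibp Rg k.
Proof. by []. Qed.
Lemma luc_rec (Rg : nzRingType) (k : nat) : lucp Rg k.+2 = 'X * lucp Rg k.+1 + lucp Rg k.
Proof. by []. Qed.
Lemma fib0 (Rg : nzRingType) : fibp Rg 0 = 0. Proof. by []. Qed.
Lemma fib1 (Rg : nzRingType) : fibp Rg 1 = 1. Proof. by []. Qed.
Lemma luc0 (Rg : nzRingType) : lucp Rg 0 = 2%:R%:P. Proof. by []. Qed.
Lemma luc1 (Rg : nzRingType) : lucp Rg 1 = 'X. Proof. by []. Qed.

Lemma luc_fib (Rg : comNzRingType) (k : nat) :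
  lucp Rg k.+1 = fibp Rg k.+2 + fibp Rg k /\ lucp Rg k.+2 = fibp Rg k.+3 + fibp Rg k.+1.
Proof.
elim: k => [|k [IH1 IH2]].
  rewrite luc_rec !fib_rec luc1 luc0 fib1 fib0 polyC_natr.
  split; ring.
split=> //.
rewrite luc_rec IH1 IH2 (fib_rec _ k.+2) (fib_rec _ k.+1) (fib_rec _ k).
set A := fibp Rg k.+1; set B := fibp Rg k; ring.
Qed.

Local Open Scope complex_scope.

Theorem theorem11 (R : realType) (n r : nat) (x : R[i]) :
  (1 <= r)%N ->
  x * (fibp _ r).[x] != 0 ->
  (2 * \sum_(j < n.+1) (fibp _ r.-1).[x] ^+ j * (fibp _ r.+1).[x] ^+ (n - j)
   = \sum_(j < n.+1) ((lucp _ r).[x] / 2) ^+ j *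
        ((fibp _ r.+1).[x] ^+ (n - j) + (fibp _ r.-1).[x] ^+ (n - j)))
  /\
  (\sum_(j < n.+1) ((lucp _ r).[x] / 2) ^+ j *
        ((fibp _ r.+1).[x] ^+ (n - j) + (fibp _ r.-1).[x] ^+ (n - j))
   = 2 * (((fibp _ r.+1).[x] ^+ n.+1 - (fibp _ r.-1).[x] ^+ n.+1)
          / (x * (fibp _ r).[x]))).
Proof.
case: r => [//|s] _ /=.
have hd : (fibp R[i] s.+2).[x] - (fibp R[i] s).[x] = x * (fibp R[i] s.+1).[x].
  by rewrite fib_rec hornerD hornerM hornerX addrK.
have hl : (lucp R[i] s.+1).[x] = (fibp R[i] s.+2).[x] + (fibp R[i] s).[x].
  by rewrite (luc_fib _ s).1 hornerD.
rewrite -hd hl => hne.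
set a := (fibp R[i] s.+2).[x]; set b := (fibp R[i] s).[x].
have h2 : (2 : R[i]) != 0 by rewrite pnatr_eq0.
have hm : 2 * ((a + b) / 2) = a + b by rewrite mulrC mulfVK.
have E := @luc_sum _ _ _ _ n hm.
have G := @geom_sum _ a b n.
split.
  by apply: (mulfI hne); rewrite E mulrCA G.
by apply: (mulfI hne); rewrite E mulrCA [(a - b) * _]mulrC divfK.
Qed.
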